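(* Let $G$ be a finite group and $H\trianglelefteq G$ an atomically universally definable normal subgroup. Then $\mathrm{EQN\text{-}ID}(G/H)\le_{\mathrm m}^{\mathsf{AC}^0}\mathrm{EQN\text{-}ID}(G)$.
   Context: An expression over a group $G$ is a word over $G\cup\mathcal{X}\cup\mathcal{X}^{-1}$ ($\mathcal{X}$ variables, $\mathcal{X}^{-1}$ formal inverses), evaluated under assignments $\sigma:\mathcal{X}\to G$ with $\sigma(X^{-1})=\sigma(X)^{-1}$, $\sigma(g)=g$. $\mathrm{EQN\text{-}ID}(G)$: given an expression $\alpha$, decide whether $\sigma(\alpha)=1$ for all assignments $\sigma$. A subset $S\subseteq G$ is atomically universally definable if there is an expression $\alpha$ over variables $\{X,Y_1,Y_2,\dots\}$ such that $S=\{g\in G:(\sigma\cup[X\mapsto g])(\alpha)=1\text{ for all }\sigma:\{Y_1,Y_2,\dots\}\to G\}$. $\le_{\mathrm m}^{\mathsf{AC}^0}$ denotes many-one reducibility via functions computable by polynomial-size constant-depth Boolean circuits. *)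

(* Defs.v *)
From HB Require Import structures.
From mathcomp Require Import all_boot all_order all_fingroup.
Set Implicit Arguments. Unset Strict Implicit. Unset Printing Implicit Defensive.

(* Constant-depth, unbounded fan-in Boolean circuits, represented as trees  *)
(* (formulas); a constant-depth polynomial-size circuit unfolds into a      *)
(* constant-depth polynomial-size formula, so this is no restriction.       *)
Inductive circ (A : Type) : Type :=
  | CIn of nat & A
  | CConst of bool
  | CNot of circ A
  | CAnd of seq (circ A)
  | COr of seq (circ A).

Fixpoint ceval (A : eqType) (x : seq A) (c : circ A) : bool :=
  match c with
  | CIn i a => nth None (map Some x) i == Some a
  | CConst b => b
  | CNot c' => ~~ ceval x c'
  | CAnd cs => all (ceval x) cs
  | COr cs => has (ceval x) cs
  end.

Fixpoint csize (A : Type) (c : circ A) : nat :=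
  match c with
  | CIn _ _ => 1
  | CConst _ => 1
  | CNot c' => (csize c').+1
  | CAnd cs => (sumn (map (@csize A) cs)).+1
  | COr cs => (sumn (map (@csize A) cs)).+1
  end.

Fixpoint cdepth (A : Type) (c : circ A) : nat :=
  match c with
  | CIn _ _ => 0
  | CConst _ => 0
  | CNot c' => (cdepth c').+1
  | CAnd cs => (foldr maxn 0 (map (@cdepth A) cs)).+1
  | COr cs => (foldr maxn 0 (map (@cdepth A) cs)).+1
  end.

(* f : A^* -> B^* is AC^0-computable: for each input length n there are     *)
(* m n output positions; position j carries one circuit per value           *)
(* o : option B (None = blank), exactly one of which fires; the output is   *)
(* the sequence of non-blank symbols.  Depth is bounded by a constant d,    *)
(* sizes and number of outputs by a polynomial (n+1)^k.                     *)
Definition AC0_computable (A B : finType) (f : seq A -> seq B) : Prop :=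
  exists (d k : nat) (m : nat -> nat) (C : nat -> nat -> option B -> circ A),
    [/\ forall n, m n <= n.+1 ^ k,
        forall n j o, csize (C n j o) <= n.+1 ^ k,
        forall n j o, cdepth (C n j o) <= d,
        forall x j, j < m (size x) ->
          #|[pred o : option B | ceval x (C (size x) j o)]| = 1
      & forall x, f x =
          pmap id [seq odflt None [pick o : option B | ceval x (C (size x) j o)]
                  | j <- iota 0 (m (size x))] ].

Definition AC0_many_one (A B : finType) (L1 : seq A -> Prop) (L2 : seq B -> Prop)
  : Prop :=
  exists f : seq A -> seq B, AC0_computable f /\ forall x, L1 x <-> L2 (f x).

Inductive atom (T : Type) : Type :=
  | AConst of T
  | AVar of nat & bool.

Definition atom_eval (T : finGroupType) (s : nat -> T) (a : atom T) : T :=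
  match a with
  | AConst g => g
  | AVar i b => if b then ((s i)^-1)%g else s i
  end.

Definition expr_eval (T : finGroupType) (s : nat -> T) (e : seq (atom T)) : T :=
  foldr (fun a acc => (atom_eval s a * acc)%g) 1%g e.

Definition is_identity (T : finGroupType) (e : seq (atom T)) : Prop :=
  forall s : nat -> T, expr_eval s e = 1%g.

(* letter T = T (constants) + {X, X^-1 markers} + {binary digits}.         *)
(* X_i is encoded as the marker followed by the binary expansion of i      *)
(* (most significant bit first, no leading zeros, 0 = empty).               *)
Definition letter (T : Type) := (T + (bool + bool))%type.
Definition LConst (T : Type) (g : T) : letter T := inl g.
Definition LMark (T : Type) (inv : bool) : letter T := inr (inl inv).
Definition LBit (T : Type) (b : bool) : letter T := inr (inr b).

Fixpoint bin_aux (k n : nat) : seq bool :=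
  match k with
  | 0 => [::]
  | k'.+1 => if n is 0 then [::] else rcons (bin_aux k' n./2) (odd n)
  end.
Definition bin (n : nat) : seq bool := bin_aux n n.

Definition enc_atom (T : Type) (a : atom T) : seq (letter T) :=
  match a with
  | AConst g => [:: LConst g]
  | AVar i b => LMark T b :: map (@LBit T) (bin i)
  end.

Definition encode (T : Type) (e : seq (atom T)) : seq (letter T) :=
  flatten (map (@enc_atom T) e).

Definition EQN_ID (T : finGroupType) (w : seq (letter T)) : Prop :=
  exists e : seq (atom T), w = encode e /\ is_identity e.

(* S is atomically universally definable: variable 0 plays the role of X,  *)
(* variables 1, 2, ... the roles of Y_1, Y_2, ...                           *)
Definition atomically_universally_definable (T : finGroupType) (S : {set T})
  : Prop :=
  exists alpha : seq (atom T), forall g : T,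
    g \in S <-> (forall s : nat -> T, s 0 = g -> expr_eval s alpha = 1%g).

(* Main.v *)
Require Import Defs.
From HB Require Import structures.
From mathcomp Require Import all_boot all_order all_fingroup.
From mathcomp Require Import cyclic zify.
Set Implicit Arguments. Unset Strict Implicit. Unset Printing Implicit Defensive.

Definition nob (s : seq bool) : nat := foldl (fun acc (b : bool) => acc.*2 + b) 0 s.

Lemma nob_rcons s b : nob (rcons s b) = (nob s).*2 + b.
Proof. by rewrite /nob foldl_rcons. Qed.

Lemma nob_bin_aux k n : n <= k -> nob (bin_aux k n) = n.
Proof.
elim: k n => [|k IH] [|n] //= Hn.
rewrite nob_rcons IH; last first.
  have := odd_double_half n.+1. rewrite -muln2. lia.
have := odd_double_half n.+1. rewrite -!muln2. lia.
Qed.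

Lemma nob_bin n : nob (bin n) = n.
Proof. exact: nob_bin_aux. Qed.

Lemma bin_inj : injective bin.
Proof. by move=> i j E; rewrite -(nob_bin i) E nob_bin. Qed.

Lemma nob_lt s : nob s < 2 ^ size s.
Proof.
elim/last_ind: s => [|s b IH] //=.
rewrite nob_rcons size_rcons expnS -muln2. case: b; simpl; lia.
Qed.

Lemma bin_lt n : n < 2 ^ size (bin n).
Proof. by rewrite -{1}(nob_bin n) nob_lt. Qed.

Lemma size_bin_aux k n m : n < 2 ^ m -> size (bin_aux k n) <= m.
Proof.
elim: k n m => [|k IH] [|n] m //= Hn.
rewrite size_rcons. case: m Hn => [|m] Hn; first by rewrite expn0 in Hn.
rewrite ltnS; apply: IH.
have := odd_double_half n.+1. rewrite expnS in Hn. rewrite -muln2 => E. lia.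
Qed.

Lemma size_bin n m : n < 2 ^ m -> size (bin n) <= m.
Proof. exact: size_bin_aux. Qed.

Section Enc.
Variable T : Type.

Lemma encode_cat (e1 e2 : seq (atom T)) : encode (e1 ++ e2) = encode e1 ++ encode e2.
Proof. by rewrite /encode map_cat flatten_cat. Qed.

Lemma encode_nseq k (e : seq (atom T)) :
  encode (flatten (nseq k e)) = flatten (nseq k (encode e)).
Proof. by elim: k => //= k IH; rewrite encode_cat IH. Qed.

Lemma encode_cons (a : atom T) e : encode (a :: e) = enc_atom a ++ encode e.
Proof. by []. Qed.

Lemma bits_split (s : seq bool) (t u : seq (letter T)) x v :
  map (@LBit T) s ++ t = u ++ LConst x :: v ->
  exists u', u = map (@LBit T) s ++ u' /\ t = u' ++ LConst x :: v.
Proof.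
elim: s u => [|b s IH] u /=; first by move=> ->; exists u.
case: u => [|l u] //= [<- E]. have [u' [-> ->]] := IH _ E. by exists u'.
Qed.

Lemma parseA (e : seq (atom T)) u x v :
  encode e = u ++ LConst x :: v -> exists e1, u = encode e1.
Proof.
elim: e u => [|a e IH] u; first by case: u.
case: u => [|l u]; first by exists [::].
rewrite encode_cons; case: a => [g|i b] /= [El E].
  subst l. have [e1 ->] := IH _ E. by exists (AConst g :: e1).
have [u' [-> E']] := bits_split E. have [e1 ->] := IH _ E'.
subst l. by exists (AVar T i b :: e1).
Qed.

Definition nobit (t : seq (letter T)) := forall b t', t <> LBit T b :: t'.

Lemma nobit_encode e : nobit (encode e).
Proof. by case: e => [|[g|i b] e] bb t'. Qed.

Lemma bits_cancel (s1 s2 : seq bool) (t1 t2 : seq (letter T)) :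
  map (@LBit T) s1 ++ t1 = map (@LBit T) s2 ++ t2 -> nobit t1 -> nobit t2 ->
  s1 = s2 /\ t1 = t2.
Proof.
elim: s1 s2 => [|b1 s1 IH] [|b2 s2] //=.
- by move=> E N _; case: (N b2 _ E).
- by move=> E _ N; case: (N b1 _ (esym E)).
- move=> [-> E] N1 N2. by have [-> ->] := IH _ E N1 N2.
Qed.

Lemma encode_inj : injective (@encode T).
Proof.
elim=> [|a e IH] [|a' e'] //.
- by case: a' => [g|i b].
- by case: a => [g|i b].
rewrite !encode_cons; case: a => [g|i b]; case: a' => [g'|i' b'] //=.
  by case=> -> /IH ->.
case=> -> E. have [/bin_inj -> /IH ->] := bits_cancel E (@nobit_encode e) (@nobit_encode e').
by [].
Qed.

Lemma bits_split2 (U : Type) (hl : U -> letter T) (w : seq U) (s : seq bool) t :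
  (forall l b, hl l = LBit T b -> l = l) -> map hl w = map (@LBit T) s ++ t ->
  exists w1 w2, w = w1 ++ w2 /\ map hl w1 = map (@LBit T) s /\ map hl w2 = t.
Proof.
move=> _; elim: s w => [|b s IH] w /=; first by move=> E; exists [::], w.
case: w => [|l w] //= [E1 E]. have [w1 [w2 [-> [E2 E3]]]] := IH _ E.
by exists (l :: w1), w2; rewrite /= E1 E2.
Qed.

End Enc.

Lemma vars_bound (T : Type) (e : seq (atom T)) B :
  size (encode e) <= B ->
  all (fun a => if a is AVar i _ then i < 2 ^ B else true) e.
Proof.
elim: e => [|a e IH] //=; rewrite encode_cons size_cat => Hs.
rewrite IH ?andbT; last by lia.
case: a Hs => [g|i b] //= Hs. apply: (leq_trans (bin_lt i)).
apply: leq_pexp2l => //. rewrite size_map in Hs. lia.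
Qed.

Section Eval.
Variable gT : finGroupType.
Implicit Types (s : nat -> gT) (e u v : seq (atom gT)).

Lemma expr_eval_cons s a e : expr_eval s (a :: e) = (atom_eval s a * expr_eval s e)%g.
Proof. by []. Qed.

Lemma expr_eval_cat s u v : expr_eval s (u ++ v) = (expr_eval s u * expr_eval s v)%g.
Proof. elim: u => [|a u IH] /=; first by rewrite mul1g. by rewrite IH mulgA. Qed.

Lemma expr_eval_nseq s k u : expr_eval s (flatten (nseq k u)) = (expr_eval s u ^+ k)%g.
Proof. elim: k => [|k IH] //=. by rewrite expr_eval_cat IH expgS. Qed.

Lemma expr_eval_ext s1 s2 e : (forall i, s1 i = s2 i) -> expr_eval s1 e = expr_eval s2 e.
Proof. move=> E; elim: e => [|[g|i b] e IH] //=; by rewrite IH ?E. Qed.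

Lemma expr_eval_bnd s1 s2 e B :
  all (fun a => if a is AVar i _ then i < B else true) e ->
  (forall i, i < B -> s1 i = s2 i) -> expr_eval s1 e = expr_eval s2 e.
Proof.
move=> + E; elim: e => [|[g|i b] e IH] //=. by move/IH ->.
by case/andP=> /E -> /IH ->.
Qed.
End Eval.

Section Quot.
Variable gT : finGroupType.
Variable H : {group gT}.
Hypothesis nH : (H <| [set: gT])%g.

Definition hl (l : letter (coset_of H)) : letter gT :=
  match l with inl c => inl (repr (c : {set gT})) | inr z => inr z end.
Definition hat (a : atom (coset_of H)) : atom gT :=
  match a with AConst c => AConst (repr (c : {set gT})) | AVar i b => AVar gT i b end.

Lemma encode_hat e : encode (map hat e) = map hl (encode e).
Proof.
elim: e => [|a e IH] //=. rewrite !encode_cons map_cat IH. case: a => //= i b.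
by rewrite -map_comp.
Qed.

Lemma parseB e1 w : map hl w = encode e1 -> exists e, w = encode e.
Proof.
elim: e1 w => [|a e1 IH] w; first by case: w => [|? ?] // _; exists [::].
rewrite encode_cons; case: a => [g|i b]; case: w => [|l w] //= [El E].
  case: l El => //= c _. have [e ->] := IH _ E. by exists (AConst c :: e).
case: l El => //= z0 [->].
have [w1 [w2 [-> [E1 E2]]]] := bits_split2 (fun _ _ _ => erefl) E.
have [e ->] := IH _ E2.
have -> : w1 = map (@LBit _) (bin i).
  elim: (bin i) w1 E1 {E} => [|bb s IHs] [|l w1] //= [El /IHs ->].
  by case: l El => //= z1 [->].
by exists (AVar _ i b :: e).
Qed.

Lemma inN x : (x \in 'N(H))%g.
Proof. by apply: (subsetP (normal_norm nH)); rewrite in_setT. Qed.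

Lemma coset_eval s e :
  coset H (expr_eval s (map hat e)) = expr_eval (fun i => coset H (s i)) e.
Proof.
elim: e => [|a e IH] /=; first by rewrite morph1.
rewrite morphM ?inN // -IH; congr (_ * _)%g.
case: a => [c|i b] /=; first by rewrite coset_reprK.
by case: b => //; rewrite morphV ?inN.
Qed.
End Quot.

Section Out.
Variables (gT : finGroupType) (N n : nat) (alpha : seq (atom gT)).

Definition pieceE (X : seq (atom gT)) (a : atom gT) : seq (atom gT) :=
  match a with
  | AConst g => [:: AConst g]
  | AVar 0 false => X
  | AVar 0 true => flatten (nseq N.-1 X)
  | AVar j b => [:: AVar gT (2 ^ n + j) b]
  end.

Definition EE X := X ++ AConst 1%g :: flatten (nseq N.-1 X) ++ flatten (map (pieceE X) alpha).

Definition piece (Z : Type) (fx : letter gT -> Z) (X : seq Z) (a : atom gT) : seq Z :=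
  match a with
  | AConst g => [:: fx (LConst g)]
  | AVar 0 false => X
  | AVar 0 true => flatten (nseq N.-1 X)
  | AVar j b => map fx (enc_atom (AVar gT (2 ^ n + j) b))
  end.

Definition outg (Z : Type) (fx : letter gT -> Z) (X : seq Z) : seq Z :=
  X ++ fx (LConst 1%g) :: flatten (nseq N.-1 X) ++ flatten (map (piece fx X) alpha).

Lemma encode_EE X : encode (EE X) = outg id (encode X).
Proof.
rewrite /EE /outg encode_cat encode_cons encode_cat encode_nseq; congr (_ ++ _ :: _ ++ _).
elim: alpha => [|a al IH] //=. rewrite encode_cat IH; congr (_ ++ _).
case: a => [g|[|j] [|]] //=; rewrite ?cats0 ?encode_nseq ?map_id //. all: by rewrite encode_cons cats0.
Qed.

Lemma map_flatten_nseq (Z Z' : Type) (F : Z -> Z') k (X : seq Z) :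
  map F (flatten (nseq k X)) = flatten (nseq k (map F X)).
Proof. by elim: k => //= k IH; rewrite map_cat IH. Qed.

Lemma map_outg (Z Z' : Type) (fx : letter gT -> Z) (F : Z -> Z') X :
  map F (outg fx X) = outg (fun l => F (fx l)) (map F X).
Proof.
rewrite /outg map_cat /= map_cat map_flatten_nseq; congr (_ ++ _ :: _ ++ _).
elim: alpha => [|a al IH] //=. rewrite map_cat IH; congr (_ ++ _).
case: a => [g|[|j] [|]] //=; rewrite ?map_flatten_nseq -?map_comp //.
Qed.

Lemma eval_pieces s X :
  (expr_eval s X ^+ N = 1)%g -> 0 < N ->
  expr_eval s (flatten (map (pieceE X) alpha)) =
  expr_eval (fun i => if i is 0 then expr_eval s X else s (2 ^ n + i)) alpha.
Proof.
move=> HN N0.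
have Hinv : ((expr_eval s X)^-1 = expr_eval s X ^+ N.-1)%g.
  by rewrite -{1}(mulg1 (expr_eval s X)^-1)%g -HN -(prednK N0) expgS mulKg.
elim: alpha => [|a al IH] //=. rewrite expr_eval_cat IH; congr (_ * _)%g.
case: a => [g|[|j] [|]] /=; rewrite ?mulg1 ?expr_eval_nseq //.
Qed.

Lemma eval_EE s X :
  (expr_eval s X ^+ N = 1)%g -> 0 < N ->
  expr_eval s (EE X) =
  expr_eval (fun i => if i is 0 then expr_eval s X else s (2 ^ n + i)) alpha.
Proof.
move=> HN N0. rewrite /EE expr_eval_cat expr_eval_cons expr_eval_cat eval_pieces //.
rewrite expr_eval_nseq /= mul1g mulgA -expgS prednK // HN mul1g //.
Qed.
End Out.

Section Sem.
Variable gT : finGroupType.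
Variable H : {group gT}.
Hypothesis nH : (H <| [set: gT])%g.
Variable alpha : seq (atom gT).
Hypothesis Hdef : forall g : gT,
    g \in H <-> (forall s : nat -> gT, s 0 = g -> expr_eval s alpha = 1%g).

Lemma expN (x : gT) : (x ^+ #|gT| = 1)%g.
Proof. by rewrite -cardsT expg_cardG ?in_setT. Qed.

Lemma N0 : 0 < #|gT|.
Proof. by rewrite -cardsT (cardG_gt0 [set: gT]%G). Qed.

Lemma vars_hat B (e : seq (atom (coset_of H))) :
  all (fun a => if a is AVar i _ then i < B else true) e ->
  all (fun a => if a is AVar i _ then i < B else true) (map (@hat _ H) e).
Proof. by elim: e => [|[g|i b] e IH] //= /andP[-> /IH]. Qed.

Lemma ident_iff n (e : seq (atom (coset_of H))) : size (encode e) <= n ->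
  is_identity (EE #|gT| n alpha (map (@hat _ H) e)) <-> is_identity e.
Proof.
move=> Hsz; have Hv := vars_hat (vars_bound Hsz).
split=> Hid.
- move=> sig. pose s0 i := repr (sig i : {set gT}).
  pose x := expr_eval s0 (map (@hat _ H) e).
  have cx : coset H x = expr_eval sig e.
    rewrite /x coset_eval //. apply: expr_eval_ext => i. by rewrite /s0 coset_reprK.
  rewrite -cx coset_id //. apply/Hdef => s' s'0.
  pose s i := if i < 2 ^ n then s0 i else s' (i - 2 ^ n).
  have ex : expr_eval s (map (@hat _ H) e) = x.
    apply: (expr_eval_bnd Hv) => i Hi. by rewrite /s Hi.
  have := Hid s. rewrite eval_EE ?expN ?N0 // => <-.
  apply: expr_eval_ext => -[|i] /=; first by rewrite ex.
  rewrite /s ifN; last by rewrite -leqNgt; lia.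
  congr s'; lia.
- move=> s. rewrite eval_EE ?expN ?N0 //. apply: (proj1 (Hdef (expr_eval s (map (@hat _ H) e)))) => //.
  apply: coset_idr; first exact: inN.
  by rewrite coset_eval // Hid.
Qed.
End Sem.

Lemma nth_Some (T : Type) (x : seq T) d i : i < size x ->
  nth None (map Some x) i = Some (nth d x i).
Proof. by elim: x i => [|y x IH] [|i] //= /IH. Qed.

Lemma pmap_id_some (T : Type) (l : seq T) : pmap id (map Some l) = l.
Proof. by elim: l => //= a l ->. Qed.

Section Circ.
Variable gT : finGroupType.
Variable H : {group gT}.
Variable alpha : seq (atom gT).
Local Notation L := (letter (coset_of H)).
Local Notation src := (nat + letter gT)%type.

Definition tmpl n : seq src := outg #|gT| n alpha inr (map inl (iota 0 n)).
Definition dl : L := LConst 1%g.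
Definition dg : letter gT := LConst 1%g.
Definition interp (w : seq L) (t : src) : letter gT :=
  match t with inl i => hl (nth dl w i) | inr c => c end.
Definition OUT (w : seq L) := outg #|gT| (size w) alpha id (map (@hl _ H) w).
Definition fred (w : seq L) := if size w is 0 then [::] else OUT w.

Lemma OUT_tmpl w : OUT w = map (interp w) (tmpl (size w)).
Proof.
rewrite /tmpl map_outg -map_comp /OUT; congr outg.
by rewrite -{1}(mkseq_nth dl w) /mkseq -map_comp.
Qed.

Definition circ_of (t : src) (o : option (letter gT)) : circ L :=
  match t with
  | inl i => COr [seq CIn i a | a <- [seq a <- enum (@predT L) | Some (hl a) == o]]
  | inr c => CConst L (Some c == o)
  end.

Definition Cc n j o : circ L :=
  if n is 0 then CConst L false else circ_of (nth (inr dg) (tmpl n) j) o.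
Definition mm n := if n is 0 then 0 else size (tmpl n).

Definition okP n (t : src) := if t is inl i then i < n else true.

Lemma all_nseq (Z : Type) (P : pred Z) k X : all P X -> all P (flatten (nseq k X)).
Proof. by move=> HX; elim: k => //= k IH; rewrite all_cat HX. Qed.

Lemma all_tmpl n : all (okP n) (tmpl n).
Proof.
have HX : all (okP n) (map inl (iota 0 n)).
  rewrite all_map; apply/allP => i; rewrite mem_iota /=; lia.
rewrite /tmpl /outg all_cat /= HX all_cat all_nseq //=.
elim: alpha => [|a al IH] //=; rewrite all_cat IH andbT.
case: a => [g|[|j] [|]] //=; rewrite ?all_nseq // all_map; by apply/allP.
Qed.

Lemma ceval_circ (x : seq L) t o : okP (size x) t ->
  ceval x (circ_of t o) = (o == Some (interp x t)).
Proof.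
case: t => [i|c] /=; last by rewrite eq_sym.
move=> Hi. rewrite has_map.
apply/hasP/eqP.
- move=> [a]; rewrite mem_filter => /andP[/eqP <- _] /=.
  by rewrite (nth_Some dl Hi) => /eqP [->].
- move=> ->; exists (nth dl x i); first by rewrite mem_filter eqxx mem_enum.
  by rewrite /= (nth_Some dl Hi) eqxx.
Qed.

Lemma Cc_ok x j : j < mm (size x) ->
  forall o, ceval x (Cc (size x) j o) = (o == Some (interp x (nth (inr dg) (tmpl (size x)) j))).
Proof.
rewrite /mm /Cc; case E: (size x) => [|n] // Hj o.
rewrite -E ceval_circ //. rewrite E.
exact: (allP (all_tmpl n.+1)) _ (mem_nth _ Hj).
Qed.

Lemma card_Cc x j : j < mm (size x) ->
  #|[pred o : option (letter gT) | ceval x (Cc (size x) j o)]| = 1.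
Proof.
move=> Hj. rewrite -(card1 (Some (interp x (nth (inr dg) (tmpl (size x)) j)))).
apply: eq_card => o. by rewrite !inE Cc_ok.
Qed.

Lemma fred_eq x : fred x =
  pmap id [seq odflt None [pick o : option (letter gT) | ceval x (Cc (size x) j o)]
          | j <- iota 0 (mm (size x))].
Proof.
rewrite /fred /mm. case E: (size x) => [|n] //.
rewrite -E.
have -> : [seq odflt None [pick o : option (letter gT) | ceval x (Cc (size x) j o)]
          | j <- iota 0 (size (tmpl (size x)))] =
          map Some (map (interp x) (tmpl (size x))).
  rewrite -{2}(mkseq_nth (inr dg) (tmpl (size x))) /mkseq -!map_comp.
  apply/eq_in_map => j; rewrite mem_iota /= => Hj.
  have Hj' : j < mm (size x) by rewrite /mm E -E.
  case: pickP => [o|] /=; first by rewrite Cc_ok // => /eqP.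
  by move/(_ (Some (interp x (nth (inr dg) (tmpl (size x)) j)))); rewrite Cc_ok // eqxx.
by rewrite pmap_id_some OUT_tmpl.
Qed.
End Circ.

Lemma size_fnseq (Z : Type) k (X : seq Z) : size (flatten (nseq k X)) = k * size X.
Proof. elim: k => //= k IH; rewrite size_cat IH mulSn //. Qed.

Section Sz.
Variables (gT : finGroupType) (N n : nat) (alpha : seq (atom gT)).
Definition wt (a : atom gT) := if a is AVar j _ then N + j + 3 else 1.
Definition W := sumn (map wt alpha).

Lemma big_bin j : 2 ^ n + j < 2 ^ (n + j + 1).
Proof.
rewrite -addnA expnD addn1 expnS. have := ltn_expl j (isT : 1 < 2). have : 0 < 2 ^ n by rewrite expn_gt0.
move: (2 ^ n) (2 ^ j) => a b. nia.
Qed.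

Lemma size_piece (Z : Type) (fx : letter gT -> Z) X a : size X = n ->
  size (piece N n fx X a) <= (n + 1) * wt a.
Proof.
have := leq_pred N; move: N.-1 => N1 HN1.
move=> HX; case: a => [g|[|j] [|]] /=; rewrite ?size_fnseq ?HX; try nia.
- rewrite !size_map. have := size_bin (big_bin j.+1). nia.
- rewrite !size_map. have := size_bin (big_bin j.+1). nia.
Qed.

Lemma size_outg (Z : Type) (fx : letter gT -> Z) X : size X = n ->
  size (outg N n alpha fx X) <= (n + 1) * (N + 1 + W).
Proof.
move=> HX; rewrite /outg size_cat /= size_cat size_fnseq HX.
have : size (flatten (map (piece N n fx X) alpha)) <= (n + 1) * W.
  rewrite /W; elim: alpha => [|a al IH] //=.
  rewrite size_cat. have := size_piece fx a HX. nia.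
nia.
Qed.
End Sz.

Lemma OUT_encode (gT : finGroupType) (H : {group gT}) alpha (e : seq (atom (coset_of H))) :
  OUT alpha (encode e) = encode (EE #|gT| (size (encode e)) alpha (map (@hat _ H) e)).
Proof. by rewrite encode_EE encode_hat. Qed.

Theorem lemma2p7 (gT : finGroupType) (H : {group gT}) :
  (H <| [set: gT])%g ->
  atomically_universally_definable (H : {set gT}) ->
  AC0_many_one (@EQN_ID (coset_of H)) (@EQN_ID gT).
Proof.
move=> nH [alpha Hdef].
exists (fred alpha); split.
- pose K := #|@predT (letter (coset_of H))| + #|gT| + 1 + W #|gT| alpha + 2.
  have HK : forall n, 0 < n -> K < (n + 1) ^ K.
    move=> n n0. apply: (leq_trans (ltn_expl K (isT : 1 < 2))).
    rewrite leq_exp2r //; lia.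
  exists 1, K.+1, (mm alpha), (Cc H alpha); split.
  + case=> [|n] //. rewrite /mm.
    have := @size_outg _ #|gT| n.+1 alpha _ inr (map inl (iota 0 n.+1)).
    rewrite size_map size_iota => /(_ erefl) Hs.
    rewrite /tmpl. apply: (leq_trans Hs). rewrite expnS -addn1.
    have := HK n.+1 isT. rewrite addn1. nia.
  + case=> [|n] j o /=; first by rewrite expn_gt0.
    case: (nth _ _ j) => [i|c] /=; last by rewrite expn_gt0.
    have -> : sumn [seq csize c | c <- [seq CIn i a | a <- enum (@predT (letter (coset_of H))) & Some (hl a) == o]]
             = size [seq a <- enum (@predT (letter (coset_of H))) | Some (hl a) == o].
      by elim: (enum _) => //= a s IH; case: ifP => //= _; rewrite IH.
    have := size_filter (fun a => Some (hl a) == o) (enum (@predT (letter (coset_of H)))).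
    have := count_size (fun a => Some (hl a) == o) (enum (@predT (letter (coset_of H)))).
    rewrite -cardE. have := HK n.+1 isT. rewrite expnS addn1.
    have : #|@predT (letter (coset_of H))| <= K by rewrite /K; lia.
    move: (n.+2 ^ K) (#|@predT (letter (coset_of H))|) => P C. nia.
  + case=> [|n] j o //=. case: (nth _ _ j) => [i|c] //=.
    by elim: (enum _) => //= a s IH; case: ifP => //= _; rewrite max0n.
  + exact: card_Cc.
  + exact: fred_eq.
- move=> x; split.
  + move=> [e [-> Hid]]. rewrite /fred. case E: (size (encode e)) => [|n].
      by exists [::]; split.
    rewrite OUT_encode. eexists; split; first reflexivity.
    by apply/ident_iff.
  + move=> [e' [Ex Hid']]. rewrite /fred in Ex. case E: (size x) => [|n] in Ex.
      by exists [::]; split => //; case: x E.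
    rewrite /OUT /outg /= in Ex.
    have [e1 He1] := parseA (esym Ex).
    have [e Hx] := parseB He1. subst x.
    exists e; split => //.
    apply: (proj1 (ident_iff nH Hdef (leqnn (size (encode e))))).
    have <- // : e' = EE #|gT| (size (encode e)) alpha (map (@hat _ H) e).
    by apply: encode_inj; rewrite -OUT_encode -Ex.
Qed.
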